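(* Let $$D_{10}=\begin{bmatrix} 1 & 1 & 1 & 1 & 1 & 1 & 1 & 1 & 1 & 1 \\ 1 & -1 & -\mathrm{i} & -\mathrm{i} & -\mathrm{i} & -\mathrm{i} & \mathrm{i} & \mathrm{i} & \mathrm{i} & \mathrm{i} \\ 1 & -\mathrm{i} & -1 & \mathrm{i} & \mathrm{i} & -\mathrm{i} & -\mathrm{i} & -\mathrm{i} & \mathrm{i} & \mathrm{i} \\ 1 & -\mathrm{i} & \mathrm{i} & -1 & -\mathrm{i} & \mathrm{i} & -\mathrm{i} & \mathrm{i} & -\mathrm{i} & \mathrm{i} \\ 1 & -\mathrm{i} & \mathrm{i} & -\mathrm{i} & -1 & \mathrm{i} & \mathrm{i} & -\mathrm{i} & \mathrm{i} & -\mathrm{i} \\ 1 & -\mathrm{i} & -\mathrm{i} & \mathrm{i} & \mathrm{i} & -1 & \mathrm{i} & \mathrm{i} & -\mathrm{i} & -\mathrm{i} \\ 1 & \mathrm{i} & -\mathrm{i} & -\mathrm{i} & \mathrm{i} & \mathrm{i} & -1 & -\mathrm{i} & -\mathrm{i} & \mathrm{i} \\ 1 & \mathrm{i} & -\mathrm{i} & \mathrm{i} & -\mathrm{i} & \mathrm{i} & -\mathrm{i} & -1 & \mathrm{i} & -\mathrm{i} \\ 1 & \mathrm{i} & \mathrm{i} & -\mathrm{i} & \mathrm{i} & -\mathrm{i} & -\mathrm{i} & \mathrm{i} & -1 & -\mathrm{i} \\ 1 & \mathrm{i} & \mathrm{i} & \mathrm{i} & -\mathrm{i} & -\mathrm{i}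 & \mathrm{i} & -\mathrm{i} & -\mathrm{i} & -1 \end{bmatrix}.$$ Define real $10\times10$ matrices $V_4,V_{15},V_{16}$ (rows and columns indexed $1,\ldots,10$), all of whose entries are $0$ except: $V_4$ has entry $+1$ at positions $(2,5),(2,9),(4,7),(4,8),(6,5),(6,9),(10,7),(10,8)$ and entry $-1$ at positions $(5,2),(5,6),(7,4),(7,10),(8,4),(8,10),(9,2),(9,6)$; $V_{15}$ has entry $+1$ at positions $(4,2),(4,6),(5,2),(5,6),(9,2),(9,6),(10,2),(10,6)$ and entry $-1$ at positions $(2,4),(2,5),(2,9),(2,10),(6,4),(6,5),(6,9),(6,10)$; $V_{16}$ has entry $+1$ at positions $(4,2),(4,6),(7,5),(7,9),(8,5),(8,9),(10,2),(10,6)$ and entry $-1$ at positions $(2,4),(2,10),(5,7),(5,8),(6,4),(6,10),(9,7),(9,8)$. Then for all $a,b,c\in\mathbb{R}$, the matrix $D_{10}\circ\mathrm{EXP}\big(\mathrm{i}(aV_4+bV_{15}+cV_{16})\big)$ is a dephased complex Hadamard matrix.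
   Context: $\circ$ denotes the entrywise (Hadamard) product and $[\mathrm{EXP}(\mathrm{i}R)]_{j,k}=e^{\mathrm{i}[R]_{j,k}}$ for a real matrix $R$. A dephased complex Hadamard matrix of order $d$ is a $d\times d$ matrix with unimodular entries, first row and first column all equal to $1$, and $HH^*=dI_d$, where $^*$ is conjugate transpose. *)

(* Defs.v *)
From HB Require Import structures.
From mathcomp Require Import all_boot all_order all_algebra.
From mathcomp Require Import reals trigo.
From mathcomp Require Import complex.
Set Implicit Arguments. Unset Strict Implicit. Unset Printing Implicit Defensive.
Import Order.TTheory GRing.Theory Num.Theory.
Local Open Scope ring_scope.
Local Open Scope complex_scope.

Section Defs.
Variable R : realType.
Local Notation C := R[i].

Definition expi (t : R) : C := (cos t +i* sin t).

Definition hadamard_mx m n (A B : 'M[C]_(m, n)) : 'M[C]_(m, n) :=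
  \matrix_(i, j) (A i j * B i j).

Definition EXPi m n (A : 'M[R]_(m, n)) : 'M[C]_(m, n) :=
  \matrix_(i, j) expi (A i j).

Definition adjmx m n (A : 'M[C]_(m, n)) : 'M[C]_(n, m) :=
  \matrix_(i, j) (A j i)^*.

Definition dephased_CH n (H : 'M[C]_n.+1) : Prop :=
  [/\ forall i j, `|H i j| = 1,
      forall j, H ord0 j = 1,
      forall i, H i ord0 = 1 &
      H *m adjmx H = (n.+1)%:R%:M].

Definition code (k : nat) : C :=
  match k with 0%N => 1 | 1%N => -1 | 2%N => 'i | _ => - 'i end.

Definition D10_codes : seq (seq nat) :=
  [:: [:: 0;0;0;0;0;0;0;0;0;0];
      [:: 0;1;3;3;3;3;2;2;2;2];
      [:: 0;3;1;2;2;3;3;3;2;2];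
      [:: 0;3;2;1;3;2;3;2;3;2];
      [:: 0;3;2;3;1;2;2;3;2;3];
      [:: 0;3;3;2;2;1;2;2;3;3];
      [:: 0;2;3;3;2;2;1;3;3;2];
      [:: 0;2;3;2;3;2;3;1;2;3];
      [:: 0;2;2;3;2;3;3;2;1;3];
      [:: 0;2;2;2;3;3;2;3;3;1]]%N.

Definition D10 : 'M[C]_10 :=
  \matrix_(i, j) code (nth 0%N (nth [::] D10_codes i) j).

(* Real 10x10 matrix with +1 at positions pos, -1 at positions neg
   (positions 1-based, as in the paper), 0 elsewhere. *)
Definition pm_mx (pos neg : seq (nat * nat)) : 'M[R]_10 :=
  \matrix_(i, j)
    (if ((i.+1, j.+1) \in pos) then 1
     else if ((i.+1, j.+1) \in neg) then -1 else 0).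

Definition V4 : 'M[R]_10 :=
  pm_mx [:: (2,5);(2,9);(4,7);(4,8);(6,5);(6,9);(10,7);(10,8)]%N
        [:: (5,2);(5,6);(7,4);(7,10);(8,4);(8,10);(9,2);(9,6)]%N.
Definition V15 : 'M[R]_10 :=
  pm_mx [:: (4,2);(4,6);(5,2);(5,6);(9,2);(9,6);(10,2);(10,6)]%N
        [:: (2,4);(2,5);(2,9);(2,10);(6,4);(6,5);(6,9);(6,10)]%N.
Definition V16 : 'M[R]_10 :=
  pm_mx [:: (4,2);(4,6);(7,5);(7,9);(8,5);(8,9);(10,2);(10,6)]%N
        [:: (2,4);(2,10);(5,7);(5,8);(6,4);(6,10);(9,7);(9,8)]%N.

End Defs.

(* Main.v *)
Require Import Defs.
From HB Require Import structures.
From mathcomp Require Import all_boot all_order all_algebra.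
From mathcomp Require Import reals trigo.
From mathcomp Require Import complex.
From mathcomp Require Import ring.
Import Order.TTheory GRing.Theory Num.Theory.
Local Open Scope ring_scope.
Local Open Scope complex_scope.

Definition pmi (pos neg : seq (nat * nat)) (i j : nat) : int :=
  if ((i.+1, j.+1) \in pos) then 1
  else if ((i.+1, j.+1) \in neg) then -1 else 0.

Lemma pm_mxE (R : realType) pos neg (i j : 'I_10) :
  pm_mx R pos neg i j = (pmi pos neg i j)%:~R.
Proof. by rewrite mxE /pmi; case: ifP => _ //; case: ifP. Qed.

Definition p4 := pmi [:: (2,5);(2,9);(4,7);(4,8);(6,5);(6,9);(10,7);(10,8)]%N
        [:: (5,2);(5,6);(7,4);(7,10);(8,4);(8,10);(9,2);(9,6)]%N.
Definition p15 := pmi [:: (4,2);(4,6);(5,2);(5,6);(9,2);(9,6);(10,2);(10,6)]%N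
        [:: (2,4);(2,5);(2,9);(2,10);(6,4);(6,5);(6,9);(6,10)]%N.
Definition p16 := pmi [:: (4,2);(4,6);(7,5);(7,9);(8,5);(8,9);(10,2);(10,6)]%N
        [:: (2,4);(2,10);(5,7);(5,8);(6,4);(6,10);(9,7);(9,8)]%N.

Definition cd (i j : nat) : nat := nth 0%N (nth [::] D10_codes i) j.

Definition mulcode (x y : nat) : nat :=
  match x, y with
  | 0, 0 => 0 | 0, 1 => 1 | 0, 2 => 3 | 0, _ => 2
  | 1, 0 => 1 | 1, 1 => 0 | 1, 2 => 2 | 1, _ => 3
  | 2, 0 => 2 | 2, 1 => 3 | 2, 2 => 0 | 2, _ => 1
  | _, 0 => 3 | _, 1 => 2 | _, 2 => 1 | _, _ => 0
  end%N.

Definition oppcode (x : nat) : nat :=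
  match x with 0 => 1 | 1 => 0 | 2 => 3 | _ => 2 end%N.

Definition term (i j k : nat) : nat * (int * int * int) :=
  (mulcode (cd i k) (cd j k), (p4 i k - p4 j k, p15 i k - p15 j k, p16 i k - p16 j k)).

Definition oppt (x : nat * (int * int * int)) := (oppcode x.1, x.2).

Fixpoint cancel_n (n : nat) (s : seq (nat * (int * int * int))) : bool :=
  match n with
  | 0 => s == [::]
  | n.+1 => match s with
            | [::] => true
            | x :: s' => (oppt x \in s') && cancel_n n (rem (oppt x) s')
            end
  end%N.

Definition chk_off :=
  all (fun i => all (fun j => (i == j) || cancel_n 10 (map (term i j) (iota 0 10)))
    (iota 0 10)) (iota 0 10).
Definition chk_diag :=
  all (fun i => all (fun x => x == (0%N, (0, 0, 0))) (map (term i i) (iota 0 10)))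
   (iota 0 10).
Definition chk_row :=
  all (fun k => [&& cd 0 k == 0%N, p4 0 k == 0, p15 0 k == 0 & p16 0 k == 0]) (iota 0 10).
Definition chk_col :=
  all (fun k => [&& cd k 0 == 0%N, p4 k 0 == 0, p15 k 0 == 0 & p16 k 0 == 0]) (iota 0 10).

Lemma chk_offT : chk_off. Proof. by vm_compute. Qed.
Lemma chk_diagT : chk_diag. Proof. by vm_compute. Qed.
Lemma chk_rowT : chk_row. Proof. by vm_compute. Qed.
Lemma chk_colT : chk_col. Proof. by vm_compute. Qed.

Section Proofs.
Variable R : realType.
Local Notation C := R[i].

Lemma ii_mul : 'i * 'i = -1 :> C.
Proof. by rewrite -expr2 sqr_i. Qed.

Lemma conji : ('i : C)^* = - 'i.
Proof. by apply/eqP; rewrite eq_complex /= oppr0 !eqxx. Qed.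

Lemma code_opp m : code R (oppcode m) = - code R m.
Proof. by case: m => [|[|[|m]]] /=; rewrite ?opprK. Qed.

Lemma code_mul x y : code R x * conjc (code R y) = code R (mulcode x y).
Proof.
case: x => [|[|[|x]]]; case: y => [|[|[|y]]] /=;
  apply/eqP; rewrite eq_complex /=; apply/andP; split; apply/eqP; ring.
Qed.

Lemma expi_mul (x y : R) : expi x * conjc (expi y) = expi (x - y).
Proof.
rewrite /expi /=; apply/eqP; rewrite eq_complex /= cosB sinB.
apply/andP; split; apply/eqP; ring.
Qed.

Lemma norm_expi (t : R) : `|expi t| = 1.
Proof. by rewrite normc_def /= cos2Dsin2 sqrtr1. Qed.

Lemma norm_code m : `|code R m| = 1.
Proof.
case: m => [|[|[|m]]] /=; rewrite ?normrN ?normr1 //;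
 rewrite normc_def /= ?oppr0 ?sqrrN !expr2 ?mul0r ?mulr1 ?add0r ?addr0 sqrtr1 //.
Qed.

Definition F (a b c : R) (x : nat * (int * int * int)) : C :=
  code R x.1 * expi (a * x.2.1.1%:~R + b * x.2.1.2%:~R + c * x.2.2%:~R).

Lemma F_opp a b c x : F a b c (oppt x) = - F a b c x.
Proof. by rewrite /F /= code_opp mulNr. Qed.

Lemma cancel_sum a b c n s : cancel_n n s -> \sum_(x <- s) F a b c x = 0.
Proof.
elim: n s => [|n IH] [|x s] //=; first by rewrite big_nil.
- by rewrite big_nil.
case/andP=> Hin Hc.
rewrite big_cons.
have -> : \sum_(y <- s) F a b c y = F a b c (oppt x) + \sum_(y <- rem (oppt x) s) F a b c y.
  by rewrite (perm_big _ (perm_to_rem Hin)) big_cons.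
by rewrite IH // addr0 F_opp subrr.
Qed.

Lemma conjcM (x y : C) : conjc (x * y) = conjc x * conjc y.
Proof.
case: x => x1 x2; case: y => y1 y2.
by apply/eqP; rewrite eq_complex /=; apply/andP; split; apply/eqP; ring.
Qed.

Lemma pmiE pos neg (i j : nat) :
  (if (i.+1, j.+1) \in pos then 1 else if (i.+1, j.+1) \in neg then -1 else 0 : R)
  = (pmi pos neg i j)%:~R.
Proof. by rewrite /pmi; case: ifP => _ //; case: ifP. Qed.

Lemma H_entry a b c (i k : 'I_10) :
  hadamard_mx (D10 R) (EXPi (a *: V4 R + b *: V15 R + c *: V16 R)) i k =
  code R (cd i k) * expi (a * (p4 i k)%:~R + b * (p15 i k)%:~R + c * (p16 i k)%:~R).
Proof. by rewrite /hadamard_mx /EXPi !mxE !pmiE. Qed.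

Lemma H_prod a b c (i j k : 'I_10) :
  let H := hadamard_mx (D10 R) (EXPi (a *: V4 R + b *: V15 R + c *: V16 R)) in
  H i k * conjc (H j k) = F a b c (term i j k).
Proof.
rewrite /= !H_entry.
rewrite conjcM mulrACA code_mul expi_mul /F /term /=.
congr (_ * expi _); rewrite !intrD !intrN; ring.
Qed.

End Proofs.

Lemma in_iota10 (i : 'I_10) : (nat_of_ord i \in iota 0 10).
Proof. by rewrite mem_iota add0n ltn_ord. Qed.

Theorem mainTheorem5 (R : realType) (a b c : R) :
  dephased_CH (hadamard_mx (D10 R)
                 (EXPi (a *: V4 R + b *: V15 R + c *: V16 R))).
Proof.
have HE := @H_entry R a b c.
split.
- by move=> i j; rewrite HE normrM norm_code norm_expi mulr1.
- move=> j; rewrite HE.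
  have /allP/(_ _ (in_iota10 j)) := chk_rowT.
  case/and4P => /eqP -> /eqP -> /eqP -> /eqP ->.
  rewrite !mulr0z !mulr0 !addr0 /expi cos0 sin0 mulr1 //.
- move=> j; rewrite HE.
  have /allP/(_ _ (in_iota10 j)) := chk_colT.
  case/and4P => /eqP -> /eqP -> /eqP -> /eqP ->.
  rewrite !mulr0z !mulr0 !addr0 /expi cos0 sin0 mulr1 //.
apply/matrixP => i j; rewrite [LHS]mxE [RHS]mxE.
under eq_bigr => k _ do rewrite [X in _ * X]mxE (@H_prod R a b c i j k).
case: (eqVneq i j) => [<-|Hij].
- rewrite mulr1n.
  have -> : \sum_(k < 10) @F R a b c (term i i k) = \sum_(k < 10) (1 : R[i]).
    apply: eq_bigr => k _.
    have /allP/(_ _ (in_iota10 i)) := chk_diagT.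
    move/allP/(_ (term i i k)); rewrite map_f ?in_iota10 // => /(_ isT)/eqP ->.
    by rewrite /F /= !mulr0z !mulr0 !addr0 /expi cos0 sin0 mulr1.
  by rewrite sumr_const card_ord.
- rewrite mulr0n.
  rewrite -(big_mkord xpredT (fun k => @F R a b c (term i j k))) /index_iota subn0.
  rewrite -(big_map (term i j) xpredT (@F R a b c)).
  apply: (@cancel_sum R _ _ _ 10).
  have /allP/(_ _ (in_iota10 i))/allP/(_ _ (in_iota10 j)) := chk_offT.
  by case/orP => // /eqP /ord_inj Heq; rewrite Heq eqxx in Hij.
Qed.
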